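(* Let $\ell\ge 1$ and $k$ be integers with $k>2\ell+2$. Let $G_k$, $r$, $s_1,s_2,t_1,t_2$ and $Z$ be as defined in the context, and let $G$ be obtained from $G_k$ by replacing each edge of $G_k$ that has at least one end in $Z$ by a path of length more than $2\ell$ (the lengths of these paths may differ; their internal vertices are new). Let $S=\{r,s_1,s_2\}$ and $T=\{r,t_1,t_2\}$. Then for every $X\subseteq V(G)$ with $|X|\le 2$, there is a path $P$ of $G$ between $S$ and $T$ such that $d(X,P)>\ell$.
   Context: For an integer $k\ge 2$, let $B$ be a uniform binary tree of depth $k$: a rooted tree with root $r$ and $2^k-1$ vertices, in which every non-leaf vertex has exactly two children (a left child and a right child), and every path from the root to a leaf has exactly $k-1$ edges. Draw $B$ in the plane in the usual way, and let $p_1,\dots,p_m$ ($m=2^{k-2}$) be the vertices at distance $k-2$ from $r$, in left-to-right order. Let $\lambda_i,\rho_i$ be the left and right children (leaves) of $p_i$. Add two new vertices $s_2,t_1$, and let $Z$ be the set of leaves of $B$ together with $s_2,t_1$. Add a path $M$ with vertex set $Z$ whose vertices in order are $$\lambda_1,\ s_2,\ \lambda_2,\ \rho_1,\ \lambda_3,\ \rho_2,\ \dots,\ \lambda_m,\ \rho_{m-1},\ t_1,\ \rho_m .$$ The resulting graph $B\cup M$ is $G_k$. Set $s_1=\lambda_1$ and $t_2=\rho_m$ (the ends of $M$), so $s_2,t_1$ are the neighbours in $M$ of $s_1,t_2$ respectively. A path between $S$ and $T$ is a path with one end in $S$ and the other in $T$ (a one-vertex path on a vertex of $S\cap T$ counts).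 For sets of vertices or subgraphs $X,Y$, $d(X,Y)$ is the number of edges of a shortest path with one end in $X$ and the other in $Y$ (infinite if there is none). *)

(* Defs.v *)
From mathcomp Require Import all_boot.
Set Implicit Arguments. Unset Strict Implicit. Unset Printing Implicit Defensive.

(* ---------- The graph G_k ----------
   Tree B (depth k) in heap numbering: root r = 1, children of u are 2u, 2u+1;
   vertices 1 .. 2^k - 1; leaves 2^(k-1) .. 2^k - 1.
   p_i = 2^(k-2) + i - 1 (i = 1..m, m = 2^(k-2)), lambda_i = 2 p_i, rho_i = 2 p_i + 1.
   New vertices s2 = 2^k, t1 = 2^k + 1. *)

Definition mB (k : nat) : nat := 2 ^ (k - 2).
Definition pB (k i : nat) : nat := 2 ^ (k - 2) + i - 1.
Definition lamB (k i : nat) : nat := 2 * pB k i.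
Definition rhoB (k i : nat) : nat := (2 * pB k i).+1.
Definition rootB : nat := 1.
Definition s2B (k : nat) : nat := 2 ^ k.
Definition t1B (k : nat) : nat := (2 ^ k).+1.
Definition s1B (k : nat) : nat := lamB k 1.
Definition t2B (k : nat) : nat := rhoB k (mB k).

(* vertex sequence of the path M:
   lambda_1, s2, lambda_2, rho_1, lambda_3, rho_2, ..., lambda_m, rho_(m-1), t1, rho_m *)
Definition Mseq (k : nat) : seq nat :=
  [:: lamB k 1; s2B k]
  ++ flatten [seq [:: lamB k i.+1; rhoB k i] | i <- iota 1 (mB k - 1)]
  ++ [:: t1B k; rhoB k (mB k)].

(* Edges of G_k with at least one end in Z: the tree edges p_i lambda_i, p_i rho_i,
   and all edges of M. *)
Definition zedges (k : nat) : seq (nat * nat) :=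
  [seq (pB k i, lamB k i) | i <- iota 1 (mB k)]
  ++ [seq (pB k i, rhoB k i) | i <- iota 1 (mB k)]
  ++ zip (Mseq k) (behead (Mseq k)).

(* ---------- The subdivided graph G ----------
   Edge number j of zedges k is replaced by a path of length L j.
   Vertices: inl v for an original vertex v (1 <= v <= 2^k + 1);
             inr (j, i) for the i-th internal vertex (0 < i < L j) of the j-th path. *)
Definition vtx := (nat + (nat * nat))%type.

Definition inG (k : nat) (L : nat -> nat) (x : vtx) : Prop :=
  match x with
  | inl v => 1 <= v <= (2 ^ k).+1
  | inr (j, i) => j < size (zedges k) /\ 0 < i < L j
  end.

Definition sv (k : nat) (L : nat -> nat) (j i : nat) : vtx :=
  let e := nth (0, 0) (zedges k) j in
  if i == 0 then inl e.1 else if i == L j then inl e.2 else inr (j, i).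

Definition arcG (k : nat) (L : nat -> nat) (x y : vtx) : Prop :=
  (* tree edges with no end in Z (kept unchanged): parent u with u < 2^(k-2) *)
  (exists u, 1 <= u < 2 ^ (k - 2) /\ x = inl u /\ (y = inl (2 * u) \/ y = inl (2 * u).+1))
  \/
  (exists j i, j < size (zedges k) /\ i < L j /\ x = sv k L j i /\ y = sv k L j i.+1).

Definition adjG (k : nat) (L : nat -> nat) (x y : vtx) : Prop :=
  arcG k L x y \/ arcG k L y x.

Fixpoint walkG (k : nat) (L : nat -> nat) (x : vtx) (s : seq vtx) : Prop :=
  match s with
  | [::] => True
  | y :: s' => adjG k L x y /\ walkG k L y s'
  end.

Definition is_pathG (k : nat) (L : nat -> nat) (P : seq vtx) : Prop :=
  match P with
  | [::] => False
  | x :: s => uniq P /\ (forall v, v \in P -> inG k L v) /\ walkG k L x s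
  end.

Definition first (P : seq vtx) : vtx := head (inl 0) P.
Definition final (P : seq vtx) : vtx := last (inl 0) P.

Definition path_between (A B : seq vtx) (P : seq vtx) : Prop :=
  (first P \in A /\ final P \in B) \/ (first P \in B /\ final P \in A).

(* d(X, P) > l : every path of G with one end in X and the other in V(P)
   has more than l edges (so d = infinity when there is none). *)
Definition dist_gt (k : nat) (L : nat -> nat) (X P : seq vtx) (l : nat) : Prop :=
  forall Q, is_pathG k L Q -> path_between X P Q -> l < (size Q).-1.

Definition Sset (k : nat) : seq vtx := [:: inl rootB; inl (s1B k); inl (s2B k)].
Definition Tset (k : nat) : seq vtx := [:: inl rootB; inl (t1B k); inl (t2B k)].

(* Main.v *)
Require Import Defs.
From mathcomp Require Import all_boot zify.
Set Implicit Arguments. Unset Strict Implicit.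

Lemma nth_flat2 (A B : nat -> nat) n a t : t < n ->
  nth 0 (flatten [seq [:: A i; B i] | i <- iota a n]) t.*2 = A (a + t) /\
  nth 0 (flatten [seq [:: A i; B i] | i <- iota a n]) t.*2.+1 = B (a + t).
Proof.
elim: n a t => [|n IH] a [|t] //= Ht; first by rewrite addn0.
by rewrite addnS -addSn; apply: IH.
Qed.

Lemma size_flat2 (A B : nat -> nat) n a :
  size (flatten [seq [:: A i; B i] | i <- iota a n]) = n.*2.
Proof. elim: n a => [|n IH] a //=; by rewrite IH doubleS. Qed.

Definition mpos (m q : nat) : nat :=
  if q == 1 then 4 * m else if q == 2 * m then (4 * m).+1
  else if odd q then 2 * m + q - 2 else 2 * m + q.

Lemma mB_pos k : 0 < mB k.
Proof. by rewrite /mB expn_gt0. Qed.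

Lemma pow_k k : 2 <= k -> 2 ^ k = 4 * mB k /\ 2 ^ (k - 1) = 2 * mB k.
Proof.
move=> Hk; rewrite /mB.
have E1 : k = (k - 2).+2 by lia.
have E2 : k - 1 = (k - 2).+1 by lia.
rewrite E2 {1}E1 !expnS. lia.
Qed.

Lemma size_Mseq k : size (Mseq k) = 2 * mB k + 2.
Proof.
rewrite /Mseq size_cat /= size_cat size_flat2 /=. have := mB_pos k. lia.
Qed.

Lemma nthM k q : 2 <= k -> q < 2 * mB k + 2 -> nth 0 (Mseq k) q = mpos (mB k) q.
Proof.
move=> Hk Hq. have Hm := mB_pos k. have [H1 H2] := pow_k Hk.
rewrite /Mseq /mpos.
case: q Hq => [|[|q]] Hq /=.
- rewrite /lamB /pB /mB. have: (0 == 2 * 2 ^ (k - 2)) = false by apply/eqP; lia.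
  by move=> ->; lia.
- rewrite /s2B H1. done.
- rewrite nth_cat size_flat2.
  case: ifP => Hlt.
  + have := odd_double_half q. case Ho: (odd q) => /= Hq2.
    * have Ht : q./2 < mB k - 1 by lia.
      have [_ E] := nth_flat2 (fun i => lamB k i.+1) (rhoB k) 1 Ht.
      have Eq : q = q./2.*2.+1 by lia. rewrite {1}Eq E. rewrite /rhoB /pB /mB.
      have -> : (q.+2 == 2 * 2 ^ (k - 2)) = false by apply/eqP; rewrite /mB in Hlt; lia.
      rewrite /mB in Ht Hq2 Hlt; lia.
    * have Ht : q./2 < mB k - 1 by lia.
      have [E _] := nth_flat2 (fun i => lamB k i.+1) (rhoB k) 1 Ht.
      have Eq : q = q./2.*2 by lia. rewrite {1}Eq E. rewrite /lamB /pB /mB.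
      have -> : (q.+2 == 2 * 2 ^ (k - 2)) = false by apply/eqP; rewrite /mB in Hlt; lia.
      rewrite /mB in Ht Hq2 Hlt; lia.
  + have : q - (mB k - 1).*2 < 2 by lia.
    case Hd: (q - (mB k - 1).*2) => [|[|]] // _.
    * have -> : (q.+2 == 2 * mB k) = true by apply/eqP; lia.
      by rewrite /t1B H1.
    * have -> : (q.+2 == 2 * mB k) = false by apply/eqP; lia.
      have Ho : odd q = true.
        have -> : q = (mB k - 1).*2 + 1 by lia.
        by rewrite addn1 /= odd_double.
      rewrite Ho /t2B /rhoB /pB /=. rewrite /mB in Hd Hlt Hm Hq *. lia.
Qed.

Lemma mpos_range m q : 0 < m -> q < 2 * m + 2 -> 2 * m <= mpos m q <= (4 * m).+1.
Proof.
move=> Hm Hq; rewrite /mpos.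
have E := odd_double_half q.
case: eqP => [H1|H1]; first lia.
case: eqP => [H2|H2]; first lia.
case O: (odd q); rewrite O in E; lia.
Qed.

Lemma mpos_inj m q1 q2 : 0 < m -> q1 < 2 * m + 2 -> q2 < 2 * m + 2 ->
  mpos m q1 = mpos m q2 -> q1 = q2.
Proof.
move=> Hm H1 H2; rewrite /mpos.
have E1 := odd_double_half q1. have E2 := odd_double_half q2.
case: (q1 =P 1) => A1; case: (q2 =P 1) => B1; try lia;
case: (q1 =P 2 * m) => A2; case: (q2 =P 2 * m) => B2; try lia;
case O1: (odd q1); case O2: (odd q2); rewrite ?O1 ?O2 in E1 E2; lia.
Qed.

Lemma mpos_lam k c : 2 <= k -> 1 <= c <= mB k -> mpos (mB k) (2 * c - 2) = lamB k c.
Proof.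
move=> Hk Hc; rewrite /mpos /lamB /pB -/(mB k).
case: eqP => [H|_]; first lia.
case: eqP => [H|_]; first lia.
have -> : odd (2 * c - 2) = false.
  have -> : 2 * c - 2 = (c - 1).*2 by lia.
  by rewrite odd_double.
lia.
Qed.

Lemma mpos_rho k c : 2 <= k -> 1 <= c <= mB k -> mpos (mB k) (2 * c + 1) = rhoB k c.
Proof.
move=> Hk Hc; rewrite /mpos /rhoB /pB -/(mB k).
case: eqP => [H|_]; first lia.
case: eqP => [H|_]; first lia.
have -> : odd (2 * c + 1) = true.
  have -> : 2 * c + 1 = c.*2.+1 by lia.
  by rewrite /= odd_double.
lia.
Qed.

Lemma Mseq_eq k : 2 <= k -> Mseq k = mkseq (mpos (mB k)) (2 * mB k + 2).
Proof.
move=> Hk; apply: (@eq_from_nth _ 0); first by rewrite size_mkseq size_Mseq.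
move=> i; rewrite size_Mseq => Hi. by rewrite nthM // nth_mkseq.
Qed.

Lemma uniq_Mseq k : 2 <= k -> uniq (Mseq k).
Proof.
move=> Hk; rewrite Mseq_eq // /mkseq map_inj_in_uniq ?iota_uniq //.
move=> a b; rewrite !mem_iota => Ha Hb; apply: mpos_inj; try lia; exact: mB_pos.
Qed.

Lemma Mseq_range k z : 2 <= k -> z \in Mseq k -> 2 * mB k <= z <= (4 * mB k).+1.
Proof.
move=> Hk; rewrite Mseq_eq // /mkseq => /mapP [q]; rewrite mem_iota => Hq ->.
apply: mpos_range; [exact: mB_pos | lia].
Qed.

Lemma in_Mseq k z : 2 <= k -> 2 * mB k <= z <= (4 * mB k).+1 -> z \in Mseq k.
Proof.
move=> Hk Hz.
have S1 : {subset Mseq k <= iota (2 * mB k) (2 * mB k + 2)}.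
  move=> x /(Mseq_range Hk); rewrite mem_iota; lia.
have S2 : size (iota (2 * mB k) (2 * mB k + 2)) <= size (Mseq k).
  by rewrite size_iota size_Mseq.
have [_ E] := uniq_min_size (uniq_Mseq Hk) S1 S2.
by rewrite E mem_iota; lia.
Qed.

Lemma Mnth_range k q : 2 <= k -> q < 2 * mB k + 2 ->
  2 * mB k <= nth 0 (Mseq k) q <= (4 * mB k).+1.
Proof. move=> Hk Hq; rewrite nthM //; apply: mpos_range => //; exact: mB_pos. Qed.

Definition E k j := nth (0, 0) (zedges k) j.

Lemma size_zedges k : 2 <= k -> size (zedges k) = 4 * mB k + 1.
Proof.
move=> Hk; rewrite /zedges !size_cat !size_map size_iota size_zip size_behead size_Mseq.
lia.
Qed.

Lemma E_lam k c : 1 <= c <= mB k -> E k (c - 1) = (pB k c, lamB k c).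
Proof.
move=> Hc; rewrite /E /zedges nth_cat size_map size_iota.
have -> : c - 1 < mB k by lia.
rewrite (nth_map 0); last by rewrite size_iota; lia.
rewrite nth_iota; last lia. by have -> : 1 + (c - 1) = c by lia.
Qed.

Lemma E_rho k c : 1 <= c <= mB k -> E k (mB k + c - 1) = (pB k c, rhoB k c).
Proof.
move=> Hc; rewrite /E /zedges nth_cat size_map size_iota.
have -> : mB k + c - 1 < mB k = false by lia.
rewrite nth_cat size_map size_iota.
have -> : mB k + c - 1 - mB k < mB k by lia.
rewrite (nth_map 0); last by rewrite size_iota; lia.
rewrite nth_iota; last lia. by have -> : 1 + (mB k + c - 1 - mB k) = c by lia.
Qed.

Lemma E_M k j : 2 <= k -> 2 * mB k <= j < 4 * mB k + 1 ->
  E k j = (nth 0 (Mseq k) (j - 2 * mB k), nth 0 (Mseq k) (j - 2 * mB k).+1).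
Proof.
move=> Hk Hj; rewrite /E /zedges nth_cat size_map size_iota.
have -> : j < mB k = false by lia.
rewrite nth_cat size_map size_iota.
have -> : j - mB k < mB k = false by lia.
rewrite nth_zip_cond size_zip size_behead size_Mseq /= ?nth_behead.
have -> : j - mB k - mB k = j - 2 * mB k by lia.
by have -> : j - 2 * mB k < minn (2 * mB k + 2) (2 * mB k + 2).-1 by lia.
Qed.

Lemma E_chord k j : 2 <= k -> j < 2 * mB k ->
  mB k <= (E k j).1 < 2 * mB k /\ 2 * mB k <= (E k j).2 < 4 * mB k.
Proof.
move=> Hk Hj. have Hm := mB_pos k.
case: (ltnP j (mB k)) => Hj2.
- have H := @E_lam k j.+1 ltac:(lia).
  rewrite (_ : j.+1 - 1 = j) in H; last lia.
  rewrite H /= /lamB /pB -/(mB k); lia.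
- have H := @E_rho k (j - mB k).+1 ltac:(lia).
  rewrite (_ : mB k + (j - mB k).+1 - 1 = j) in H; last lia.
  rewrite H /= /rhoB /pB -/(mB k); lia.
Qed.

Lemma E_range k j : 2 <= k -> j < 4 * mB k + 1 ->
  mB k <= (E k j).1 <= (4 * mB k).+1 /\ mB k <= (E k j).2 <= (4 * mB k).+1.
Proof.
move=> Hk Hj. case: (ltnP j (2 * mB k)) => Hj2.
- have := E_chord Hk Hj2; lia.
- rewrite E_M; last lia. cbn [fst snd].
  have Hm := mB_pos k.
  have R1 := @Mnth_range k (j - 2 * mB k) Hk ltac:(lia).
  have R2 := @Mnth_range k (j - 2 * mB k).+1 Hk ltac:(lia).
  lia. done.
Qed.

Definition near (a b : nat) := a <= b.+1 /\ b <= a.+1.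

Definition lip k L (F : vtx -> nat) :=
  forall x y, arcG k L x y -> near (F x) (F y).

Lemma walk_lip k L F x s : lip k L F -> walkG k L x s ->
  F x <= F (last x s) + size s /\ F (last x s) <= F x + size s.
Proof.
move=> HF; elim: s x => [|y s IH] x /=; first lia.
move=> [[H|H] W]; have [A1 A2] := IH y W; have [B1 B2] := HF _ _ H; lia.
Qed.

Lemma far_path k L F l Q : lip k L F -> is_pathG k L Q ->
  (l + F (final Q) < F (first Q) \/ l + F (first Q) < F (final Q)) ->
  l < (size Q).-1.
Proof.
move=> HF; case: Q => [|x s] //= [_ [_ W]].
rewrite /final /first /=. have := walk_lip HF W. set y := last x s. move=> [A1 A2] [C1|C1]; lia.
Qed.

Lemma sv_prof k L F j (pf : nat -> nat) :
  F (inl (E k j).1) = pf 0 -> F (inl (E k j).2) = pf (L j) ->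
  (forall i, 0 < i < L j -> F (inr (j, i)) = pf i) ->
  forall i, i <= L j -> F (sv k L j i) = pf i.
Proof.
move=> H0 H1 H2 i Hi; rewrite /sv -/(E k j).
case: eqP => [->|Hi0] //. case: eqP => [->|HiL] //.
apply: H2; lia.
Qed.

Lemma lip_intro k L F :
  (forall u, 1 <= u < mB k -> near (F (inl u)) (F (inl (2 * u))) /\
                              near (F (inl u)) (F (inl (2 * u).+1))) ->
  (forall j, j < size (zedges k) -> exists pf : nat -> nat,
      (forall i, i <= L j -> F (sv k L j i) = pf i) /\
      (forall i, i < L j -> near (pf i) (pf i.+1))) ->
  lip k L F.
Proof.
move=> HT HE x y [[u [Hu [-> [->|->]]]]|[j [i [Hj [Hi [-> ->]]]]]].
- by case: (HT u Hu).
- by case: (HT u Hu).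
- have [pf [P1 P2]] := HE j Hj. rewrite !P1 //; last lia. exact: P2.
Qed.

Definition hF k (v : vtx) : nat :=
  match v with inl u => minn (trunc_log 2 u) (k - 2) | inr _ => k - 2 end.

Definition gF k L c z (v : vtx) : nat :=
  match v with
  | inl u => if u == z then c else 0
  | inr (j, i) => (if (E k j).1 == z then c - i else 0) +
                  (if (E k j).2 == z then c - (L j - i) else 0)
  end.

Definition fF (L : nat -> nat) j0 (v : vtx) : nat :=
  match v with
  | inl _ => 0
  | inr (j, i) => if j == j0 then minn i (L j - i) else 0
  end.

Definition dF k (L : nat -> nat) c (v : vtx) : nat :=
  match v with
  | inl u => if 2 * mB k <= u then 0 else c
  | inr (j, i) => if j < 2 * mB k then minn (L j - i) c else 0
  end.

Lemma tl_big k u : 2 <= k -> mB k <= u -> k - 2 <= trunc_log 2 u.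
Proof. move=> Hk Hu; apply: trunc_log_max => //. Qed.

Lemma hF_sv k L j i : 2 <= k -> j < size (zedges k) -> i <= L j ->
  hF k (sv k L j i) = k - 2.
Proof.
move=> Hk Hj Hi. rewrite size_zedges // in Hj.
have [R1 R2] := E_range Hk Hj.
rewrite (@sv_prof k L (hF k) j (fun _ => k - 2)) //=.
- have := tl_big Hk (_ : mB k <= (E k j).1); lia.
- have := tl_big Hk (_ : mB k <= (E k j).2); lia.
Qed.

Lemma hF_lip k L : 2 <= k -> lip k L (hF k).
Proof.
move=> Hk; apply: lip_intro.
- move=> u Hu /=. rewrite /near.
  have E1 : trunc_log 2 (2 * u) = (trunc_log 2 u).+1 by rewrite trunc_logMp //; lia.
  have E2 : trunc_log 2 (2 * u).+1 = (trunc_log 2 u).+1.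
    rewrite trunc_log2S; last lia.
    have -> : (2 * u).+1./2 = u.
      have -> : (2 * u).+1 = u.*2.+1 by lia.
      by rewrite /= uphalf_double.
    done.
  rewrite E1 E2; lia.
- move=> j Hj; exists (fun _ => k - 2); split => [i Hi|i Hi]; last (rewrite /near; lia).
  exact: hF_sv.
Qed.

Section Cert.
Variables (k : nat) (L : nat -> nat) (c : nat).
Hypothesis Hk : 2 <= k.
Hypothesis HL : forall j, j < size (zedges k) -> c <= L j.

Lemma gF_lip z : 2 * mB k <= z -> lip k L (gF k L c z).
Proof.
move=> Hz; apply: lip_intro.
- move=> u Hu /=. rewrite /near.
  have -> : (u == z) = false by apply/eqP; lia.
  have -> : (2 * u == z) = false by apply/eqP; lia.
  have -> : ((2 * u).+1 == z) = false by apply/eqP; lia.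
  done.
- move=> j Hj; have Hc := HL Hj.
  pose pf i := (if (E k j).1 == z then c - i else 0) +
                  (if (E k j).2 == z then c - (L j - i) else 0).
  exists pf; split => [i Hi|i Hi].
  + apply: (@sv_prof k L _ j pf) => [||i' _|] /=; rewrite /pf //;
    case: ((E k j).1 =P z) => _; case: ((E k j).2 =P z) => _; lia.
  + rewrite /near /pf; case: ((E k j).1 =P z) => _; case: ((E k j).2 =P z) => _; lia.
Qed.

Lemma gF_sv z j i : j < size (zedges k) -> i <= L j ->
  (E k j).1 != z -> (E k j).2 != z -> gF k L c z (sv k L j i) = 0.
Proof.
move=> Hj Hi /negbTE H1 /negbTE H2.
rewrite (@sv_prof k L _ j (fun _ => 0)) //= ?H1 ?H2 //.
Qed.

Lemma fF_lip j0 : lip k L (fF L j0).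
Proof.
apply: lip_intro.
- move=> u Hu /=; rewrite /near; lia.
- move=> j Hj. pose pf i := if j == j0 then minn i (L j - i) else 0.
  exists pf; split => [i Hi|i Hi].
  + apply: (@sv_prof k L _ j pf) => [||i' _|] /=; rewrite /pf //; case: (j =P j0) => _; lia.
  + rewrite /near /pf; case: (j =P j0) => _; lia.
Qed.

Lemma fF_sv j0 j i : j != j0 -> fF L j0 (sv k L j i) = 0.
Proof.
move=> /negbTE H; rewrite /sv; case: eqP => _ //; case: eqP => _ //=.
by rewrite H.
Qed.

Lemma dF_lip : lip k L (dF k L c).
Proof.
apply: lip_intro.
- move=> u Hu /=; rewrite /near.
  have -> : (2 * mB k <= u) = false by lia.
  have -> : (2 * mB k <= 2 * u) = false by lia.
  have -> : (2 * mB k <= (2 * u).+1) = false by lia.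
  lia.
- move=> j Hj; have Hc := HL Hj. have Hj' := Hj. rewrite size_zedges // in Hj'.
  case: (ltnP j (2 * mB k)) => Hj2.
  + pose pf i := minn (L j - i) c. have := E_chord Hk Hj2 => -[R1 R2].
    exists pf; split => [i Hi|i Hi].
    * apply: (@sv_prof k L _ j pf) => [||i' _|] /=; rewrite /pf //.
      - have -> : (2 * mB k <= (E k j).1) = false by lia. lia.
      - have -> : (2 * mB k <= (E k j).2) = true by lia. lia.
      - by rewrite Hj2.
    * rewrite /near /pf; lia.
  + exists (fun _ => 0). split => [i Hi|i Hi]; last (rewrite /near; lia).
    have R1 := @Mnth_range k (j - 2 * mB k) Hk ltac:(lia).
    have R2 := @Mnth_range k (j - 2 * mB k).+1 Hk ltac:(lia).
    have HE := @E_M k j Hk ltac:(lia).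
    have H1 : 2 * mB k <= (E k j).1 by rewrite HE; case/andP: R1.
    have H2 : 2 * mB k <= (E k j).2 by rewrite HE; case/andP: R2.
    have H3 : j < 2 * mB k = false by lia.
    apply: (@sv_prof k L _ j (fun _ => 0)) => [||i' _|]; cbn [dF];
      rewrite ?H1 ?H2 ?H3 //.
Qed.

End Cert.

Lemma walkG_cat k L x s1 s2 :
  walkG k L x (s1 ++ s2) <-> walkG k L x s1 /\ walkG k L (last x s1) s2.
Proof.
elim: s1 x => [|y s1 IH] x /=; first by split => // -[].
rewrite IH; tauto.
Qed.

Lemma walk_drop k L y w n : walkG k L y w -> n <= size w ->
  walkG k L (nth y (y :: w) n) (drop n w).
Proof.
elim: w y n => [|z w IH] y n /=; first by case: n.
move=> [H W]; case: n => [|n] /= Hn; first by split.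
have := IH z n W Hn. by rewrite (set_nth_default z y) //=.
Qed.

Lemma shorten_walk k L x s : walkG k L x s ->
  exists s', [/\ walkG k L x s', uniq (x :: s'), last x s' = last x s &
                {subset x :: s' <= x :: s}].
Proof.
elim: s x => [|y s IH] x /=.
  move=> _; exists [::]; split => //.
move=> [Hxy W]; have [s1 [W1 U1 L1 S1]] := IH y W.
case Hx: (x \in y :: s1).
- pose i := index x (y :: s1).
  have Hi : i < size (y :: s1) by rewrite index_mem.
  have Nx : nth y (y :: s1) i = x by rewrite nth_index.
  have D : drop i (y :: s1) = x :: drop i s1.
    by rewrite (drop_nth y Hi) Nx.
  exists (drop i s1); split.
  + rewrite -{1}Nx; apply: (walk_drop W1). by move: Hi; rewrite /= ltnS.
  + have := drop_uniq i U1. by rewrite D.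
  + rewrite -L1. have := cat_take_drop i (y :: s1). rewrite D => E.
    by rewrite -[last y s1]/(last x (y :: s1)) -E last_cat.

  + move=> v Hv. have : v \in y :: s1 by rewrite -D in Hv; exact: mem_drop Hv.
    move=> /S1 Hv'. by rewrite inE Hv' orbT.
- exists (y :: s1); split => //=.
  + by rewrite Hx.
  + move=> v; rewrite inE => /orP [/eqP ->|Hv]; first by rewrite inE eqxx.
    by rewrite inE (S1 _ Hv) orbT.
Qed.

Section Trav.
Variables (k : nat) (L : nat -> nat).

Definition trav (t : nat * bool) : seq vtx :=
  if t.2 then [seq sv k L t.1 i | i <- iota 1 (L t.1)]
  else [seq sv k L t.1 (L t.1 - i) | i <- iota 1 (L t.1)].
Definition tS (t : nat * bool) := if t.2 then (E k t.1).1 else (E k t.1).2.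
Definition tE (t : nat * bool) := if t.2 then (E k t.1).2 else (E k t.1).1.
Fixpoint chain (x : nat) (ts : seq (nat * bool)) : Prop :=
  match ts with [::] => True | t :: ts' => tS t = x /\ chain (tE t) ts' end.
Fixpoint cend (x : nat) (ts : seq (nat * bool)) : nat :=
  match ts with [::] => x | t :: ts' => cend (tE t) ts' end.
Definition ew ts := flatten (map trav ts).

Lemma fw_walk j n a : j < size (zedges k) -> a + n <= L j ->
  walkG k L (sv k L j a) [seq sv k L j i | i <- iota a.+1 n] /\
  last (sv k L j a) [seq sv k L j i | i <- iota a.+1 n] = sv k L j (a + n).
Proof.
move=> Hj; elim: n a => [|n IH] a Ha /=; first by rewrite addn0.
have [W1 L1] := IH a.+1 ltac:(lia).
split; last by rewrite L1 addSnnS.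
split => //. left; right. exists j, a. split => //. split => //. lia.
Qed.

Lemma bw_walk j n a : j < size (zedges k) -> a + n <= L j ->
  walkG k L (sv k L j (L j - a)) [seq sv k L j (L j - i) | i <- iota a.+1 n] /\
  last (sv k L j (L j - a)) [seq sv k L j (L j - i) | i <- iota a.+1 n]
    = sv k L j (L j - (a + n)).
Proof.
move=> Hj; elim: n a => [|n IH] a Ha /=; first by rewrite addn0.
have [W1 L1] := IH a.+1 ltac:(lia).
split; last by rewrite L1 addSnnS.
split => //. right; right. exists j, (L j - a.+1). split => //. split; first lia.
split => //. congr sv. lia.
Qed.

Lemma sv0 j : sv k L j 0 = inl (E k j).1.
Proof. by []. Qed.

Lemma svL j : 0 < L j -> sv k L j (L j) = inl (E k j).2.
Proof. move=> H; rewrite /sv; case: eqP => [H0|_]; [lia | by rewrite eqxx]. Qed.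

Lemma trav_walk t : t.1 < size (zedges k) -> 0 < L t.1 ->
  walkG k L (inl (tS t)) (trav t) /\ last (inl (tS t)) (trav t) = inl (tE t).
Proof.
case: t => j [] /= Hj HL; rewrite /trav /tS /tE /=.
- have := @fw_walk j (L j) 0 Hj ltac:(lia). by rewrite sv0 add0n svL.
- have := @bw_walk j (L j) 0 Hj ltac:(lia). by rewrite subn0 svL // subnn sv0.
Qed.

Lemma ew_walk ts x : chain x ts ->
  (forall t, t \in ts -> t.1 < size (zedges k) /\ 0 < L t.1) ->
  walkG k L (inl x) (ew ts) /\ last (inl x) (ew ts) = inl (cend x ts).
Proof.
elim: ts x => [|t ts IH] x //= [Hs Hc] Hts.
have [H1 H2] := Hts t (mem_head _ _).
have [W1 L1] := trav_walk H1 H2. rewrite Hs in W1 L1.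
have [W2 L2] := IH (tE t) Hc (fun t' Ht' => Hts t' (@mem_behead _ (t :: ts) t' Ht')).
rewrite /ew /= walkG_cat last_cat L1. by split.
Qed.

Lemma ew_mem ts v : v \in ew ts ->
  exists2 t, t \in ts & exists2 i, i <= L t.1 & v = sv k L t.1 i.
Proof.
elim: ts => [|t ts IH] //=; rewrite /ew /= mem_cat => /orP [H|H].
- exists t; first exact: mem_head.
  move: H; rewrite /trav; case: t.2 => /mapP [i]; rewrite mem_iota => Hi ->.
  + by exists i => //; lia.
  + by exists (L t.1 - i) => //; lia.
- have [t' Ht' Hi] := IH H. exists t' => //. by rewrite inE Ht' orbT.
Qed.

Lemma start_mem t ts x : chain x (t :: ts) -> 0 < L t.1 ->
  exists2 i, i <= L t.1 & inl x = sv k L t.1 i.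
Proof.
move=> /= [<- _] H; rewrite /tS; case: t.2.
- by exists 0.
- exists (L t.1) => //. by rewrite svL.
Qed.

End Trav.

Lemma inG_sv k L j i : 2 <= k -> j < size (zedges k) -> i <= L j ->
  inG k L (sv k L j i).
Proof.
move=> Hk Hj Hi. have Hj' := Hj. rewrite size_zedges // in Hj'.
have [R1 R2] := E_range Hk Hj'. have [P1 _] := pow_k Hk. have Hm := mB_pos k.
rewrite /sv -/(E k j). case: eqP => H0 /=; first lia.
case: eqP => HL /=; first lia. lia.
Qed.

Lemma mkpath k L x ts : 2 <= k -> (forall j, j < size (zedges k) -> 0 < L j) ->
  chain k x ts -> ts != [::] -> (forall t, t \in ts -> t.1 < size (zedges k)) ->
  exists P, [/\ is_pathG k L P, first P = inl x, final P = inl (cend k x ts) &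
    forall v, v \in P -> exists2 t, t \in ts & exists2 i, i <= L t.1 & v = sv k L t.1 i].
Proof.
move=> Hk HL Hc Hne Hts.
have Hts' : forall t, t \in ts -> t.1 < size (zedges k) /\ 0 < L t.1.
  by move=> t Ht; have := Hts t Ht; split => //; apply: HL.
have [Wk Lk] := ew_walk Hc Hts'.
have [s' [W' U' L' S']] := shorten_walk Wk.
have Hv : forall v, v \in inl x :: s' ->
    exists2 t, t \in ts & exists2 i, i <= L t.1 & v = sv k L t.1 i.
  move=> v /S'; rewrite inE => /orP [/eqP ->|Hv]; last exact: ew_mem.
  clear -Hne Hc Hts'. case: ts Hne Hc Hts' => [|t ts] // _ Hc Hts'.
  have [_ H2] := Hts' t (mem_head _ _).
  have [i Hi E] := start_mem Hc H2. exists t; first exact: mem_head.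
  by exists i.
exists (inl x :: s'); split => //=.
- split => //; split => // v /Hv [t Ht [i Hi ->]].
  apply: inG_sv => //. exact: Hts.
- by rewrite /final /= L' Lk.
Qed.

Section Runs.
Variables (k : nat) (L : nat -> nat).
Hypothesis Hk : 2 <= k.
Hypothesis HL : forall j, j < size (zedges k) -> 0 < L j.

Definition Mn q := nth 0 (Mseq k) q.
Definition mrun a n := [seq (2 * mB k + q, true) | q <- iota a n].

Lemma chain_cat x s1 s2 :
  chain k x (s1 ++ s2) <-> chain k x s1 /\ chain k (cend k x s1) s2.
Proof. elim: s1 x => [|t s1 IH] x /=; first tauto. rewrite IH; tauto. Qed.

Lemma cend_cat x s1 s2 : cend k x (s1 ++ s2) = cend k (cend k x s1) s2.
Proof. by elim: s1 x => [|t s1 IH] x //=. Qed.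

Lemma E_Mn q : q < 2 * mB k + 1 -> E k (2 * mB k + q) = (Mn q, Mn q.+1).
Proof.
move=> Hq; rewrite E_M //; last lia. rewrite /Mn (_ : 2 * mB k + q - 2 * mB k = q) //; lia.
Qed.

Lemma mrun_chain a n : a + n <= 2 * mB k + 1 ->
  chain k (Mn a) (mrun a n) /\ cend k (Mn a) (mrun a n) = Mn (a + n).
Proof.
elim: n a => [|n IH] a Ha /=; first by rewrite addn0.
rewrite /tS /tE /= E_Mn; last lia. have [C1 C2] := IH a.+1 ltac:(lia).
by rewrite C2 addSnnS.
Qed.

Lemma mrun_mem a n t : t \in mrun a n ->
  exists2 q, a <= q < a + n & t = (2 * mB k + q, true).
Proof. move=> /mapP [q]; rewrite mem_iota => Hq ->. by exists q. Qed.

Lemma Mn_inj q1 q2 : q1 < 2 * mB k + 2 -> q2 < 2 * mB k + 2 -> Mn q1 = Mn q2 -> q1 = q2.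
Proof.
move=> H1 H2; rewrite /Mn !nthM //. apply: mpos_inj => //. exact: mB_pos.
Qed.

Lemma Mn_s1 : Mn 0 = s1B k.
Proof.
rewrite /Mn nthM //; last lia. have Hm := mB_pos k.
exact: (@mpos_lam k 1 Hk ltac:(lia)).
Qed.

Lemma Mn_s2 : Mn 1 = s2B k.
Proof. rewrite /Mn nthM //; last lia. rewrite /s2B /mpos /=. by have [-> _] := pow_k Hk. Qed.

Lemma Mn_t1 : Mn (2 * mB k) = t1B k.
Proof.
rewrite /Mn nthM //; last lia. rewrite /t1B /mpos /=. have [-> _] := pow_k Hk.
have Hm := mB_pos k. have -> : (2 * mB k == 1) = false by apply/eqP; lia.
by rewrite eqxx.
Qed.

Lemma Mn_t2 : Mn (2 * mB k).+1 = t2B k.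
Proof.
rewrite /Mn nthM //; last lia. rewrite (_ : (2 * mB k).+1 = 2 * mB k + 1); last lia.
rewrite mpos_rho //. have := mB_pos k; lia.
Qed.

Lemma Mn_range q : q < 2 * mB k + 2 -> 2 * mB k <= Mn q <= (4 * mB k).+1.
Proof. exact: Mnth_range. Qed.

Definition inc z j := ((E k j).1 == z) || ((E k j).2 == z).

Lemma Cpath : exists P, [/\ is_pathG k L P, path_between (Sset k) (Tset k) P &
  forall v, v \in P -> exists j i, [/\ j < size (zedges k), i <= L j, v = sv k L j i,
     2 * mB k <= j & ~~ inc (Mn 0) j && ~~ inc (Mn (2 * mB k).+1) j]].
Proof.
have Hm := mB_pos k.
have [C1 C2] := @mrun_chain 1 (2 * mB k - 1) ltac:(lia).
have Hne : mrun 1 (2 * mB k - 1) != [::].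
  rewrite /mrun; have : 0 < 2 * mB k - 1 by lia. by case: (2 * mB k - 1).
have Hts : forall t, t \in mrun 1 (2 * mB k - 1) -> t.1 < size (zedges k).
  move=> t /mrun_mem [q Hq ->]; rewrite size_zedges //=; lia.
have [P [HP F1 F2 HV]] := mkpath Hk HL C1 Hne Hts.
exists P; split => //.
- left; rewrite F1 F2 C2 Mn_s2 (_ : 1 + (2 * mB k - 1) = 2 * mB k); last lia.
  rewrite Mn_t1 !inE !eqxx; split; by rewrite ?orbT.
- move=> v /HV [t /mrun_mem [q Hq ->] [i Hi ->]] /=.
  exists (2 * mB k + q), i; split => //; first by rewrite size_zedges //; lia.
  + lia.
  + rewrite /inc E_Mn /=; last lia.
    have N : forall a b, a < 2 * mB k + 2 -> b < 2 * mB k + 2 -> a != b -> Mn a != Mn b.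
      by move=> a b Ha Hb; apply: contra => /eqP /Mn_inj; move=> /(_ Ha Hb) ->.
    rewrite !negb_or !N //; lia.
Qed.

Lemma Mn_lam c : 1 <= c <= mB k -> Mn (2 * c - 2) = lamB k c.
Proof. move=> Hc; rewrite /Mn nthM //; last lia. exact: mpos_lam. Qed.

Lemma Mn_rho c : 1 <= c <= mB k -> Mn (2 * c + 1) = rhoB k c.
Proof. move=> Hc; rewrite /Mn nthM //; last lia. exact: mpos_rho. Qed.

Lemma Mn_neq a b : a < 2 * mB k + 2 -> b < 2 * mB k + 2 -> a != b -> Mn a != Mn b.
Proof. by move=> Ha Hb; apply: contra => /eqP /Mn_inj; move=> /(_ Ha Hb) ->. Qed.

Lemma Wpath qz : 1 <= qz <= 2 * mB k ->
  exists P, [/\ is_pathG k L P, path_between (Sset k) (Tset k) P &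
  forall v, v \in P -> exists j i, [/\ j < size (zedges k), i <= L j, v = sv k L j i
     & ~~ inc (Mn qz) j]].
Proof.
move=> Hq. have Hm := mB_pos k.
pose c := qz.+1./2.
have Hc : 1 <= c <= mB k /\ 2 * c - 1 <= qz <= 2 * c.
  have := odd_double_half qz.+1. rewrite /c. case: (odd qz.+1) => /=; lia.
pose ts := mrun 0 (2 * c - 2) ++ [:: (c - 1, false); (mB k + c - 1, true)]
           ++ mrun (2 * c + 1) (2 * mB k - 2 * c).
have [A1 A2] := @mrun_chain 0 (2 * c - 2) ltac:(lia).
have [B1 B2] := @mrun_chain (2 * c + 1) (2 * mB k - 2 * c) ltac:(lia).
have El := @E_lam k c ltac:(lia). have Er := @E_rho k c ltac:(lia).
have Ch : chain k (Mn 0) ts.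
  rewrite /ts chain_cat A2; split => //. rewrite /= /tS /tE /= El Er /=.
  rewrite add0n Mn_lam; last lia. split => //. split => //. by rewrite -Mn_rho; last lia.
have Ce : cend k (Mn 0) ts = Mn (2 * mB k).+1.
  rewrite /ts !cend_cat A2 /= /tE /= Er -Mn_rho; last lia.
  rewrite B2. congr Mn. lia.
have Hne : ts != [::] by rewrite /ts; case: (mrun 0 (2 * c - 2)).
have Hmem : forall t, t \in ts ->
   [\/ exists2 q, q < 2 * c - 2 & t = (2 * mB k + q, true),
       exists2 q, 2 * c + 1 <= q < 2 * mB k + 1 & t = (2 * mB k + q, true),
       t = (c - 1, false) | t = (mB k + c - 1, true)].
  move=> t; rewrite /ts !mem_cat => /orP [/mrun_mem [q Hq' ->]|/orP [H|/mrun_mem [q Hq' ->]]].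
  - by constructor 1; exists q => //; lia.
  - move: H; rewrite !inE => /orP [/eqP ->|/eqP ->]; by [constructor 3 | constructor 4].
  - by constructor 2; exists q => //; lia.
have Hts : forall t, t \in ts -> t.1 < size (zedges k).
  move=> t /Hmem [[q Hq' ->]|[q Hq' ->]|->|->] /=; rewrite size_zedges //; lia.
have [P [HP F1 F2 HV]] := mkpath Hk HL Ch Hne Hts.
have Rz := @Mn_range qz ltac:(lia).
exists P; split => //.
- left; rewrite F1 F2 Ce Mn_s1 Mn_t2 !inE !eqxx; split; by rewrite ?orbT.
- move=> v /HV [t Ht [i Hi ->]].
  exists t.1, i; split => //; first exact: Hts.
  rewrite /inc negb_or.
  case/Hmem: Ht => [[q Hq' ->]|[q Hq' ->]|->|->] /=.
  + rewrite E_Mn /=; last lia. rewrite !Mn_neq //; lia.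
  + rewrite E_Mn /=; last lia. rewrite !Mn_neq //; lia.
  + rewrite El /= -Mn_lam; last lia. rewrite Mn_neq; try lia.
    rewrite andbT; apply/eqP; rewrite /pB -/(mB k); lia.
  + rewrite Er /= -Mn_rho; last lia. rewrite Mn_neq; try lia.
    rewrite andbT; apply/eqP; rewrite /pB -/(mB k); lia.
Qed.

End Runs.

Section Final.
Variables (l k : nat) (L : nat -> nat).
Hypothesis Hl : 1 <= l.
Hypothesis Hkl : 2 * l + 2 < k.
Hypothesis HLj : forall j, j < size (zedges k) -> 2 * l < L j.

Let Hk : 2 <= k. Proof. lia. Qed.
Let c := (2 * l).+1.
Let HLc : forall j, j < size (zedges k) -> c <= L j.
Proof. move=> j /HLj; rewrite /c; lia. Qed.
Let HL0 : forall j, j < size (zedges k) -> 0 < L j.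
Proof. move=> j /HLj; lia. Qed.

Lemma dF_sv j i : 2 * mB k <= j -> j < size (zedges k) -> i <= L j ->
  dF k L c (sv k L j i) = 0.
Proof.
move=> H1 H2 Hi. rewrite size_zedges // in H2.
have HE := @E_Mn k Hk (j - 2 * mB k) ltac:(lia).
rewrite (_ : 2 * mB k + (j - 2 * mB k) = j) in HE; last lia.
rewrite /sv -/(E k j) HE.
have R1 := @Mn_range k Hk (j - 2 * mB k) ltac:(lia).
have R2 := @Mn_range k Hk (j - 2 * mB k).+1 ltac:(lia).
case: eqP => _ /=; first by case: leqP => //; lia.
case: eqP => _ /=; first by case: leqP => //; lia.
by case: ltnP => //; lia.
Qed.

Lemma Avoid z : 2 * mB k <= z <= (4 * mB k).+1 ->
  exists P, [/\ is_pathG k L P, path_between (Sset k) (Tset k) P &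
  forall v, v \in P -> exists j i, [/\ j < size (zedges k), i <= L j, v = sv k L j i
     & ~~ inc k z j]].
Proof.
move=> Hz. have Hin := in_Mseq Hk Hz.
pose q := index z (Mseq k).
have Hq : q < 2 * mB k + 2 by rewrite -size_Mseq index_mem.
have Eq : Mn k q = z by rewrite /Mn nth_index.
case: (q =P 0) => [H0|H0].
  have [P [HP HB HV]] := @Cpath k L Hk HL0.
  exists P; split => // v /HV [j [i [A1 A2 A3 _ /andP [A5 _]]]].
  exists j, i; split => //. by rewrite -Eq H0.
case: (q =P (2 * mB k).+1) => [H1|H1].
  have [P [HP HB HV]] := @Cpath k L Hk HL0.
  exists P; split => // v /HV [j [i [A1 A2 A3 _ /andP [_ A5]]]].
  exists j, i; split => //. by rewrite -Eq H1.
have [P [HP HB HV]] := @Wpath k L Hk HL0 q ltac:(lia).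
exists P; split => // v /HV [j [i [A1 A2 A3 A4]]].
exists j, i; split => //. by rewrite -Eq.
Qed.

Lemma Ylem y : inG k L y -> exists P, [/\ is_pathG k L P,
  path_between (Sset k) (Tset k) P, (forall v, v \in P -> hF k v = k - 2) &
  exists F, [/\ lip k L F, l < F y & forall v, v \in P -> F v = 0]].
Proof.
have [P4 P2] := pow_k Hk. have Hm := mB_pos k.
have FromC : (exists P, [/\ is_pathG k L P, path_between (Sset k) (Tset k) P &
  forall v, v \in P -> exists j i, [/\ j < size (zedges k), i <= L j, v = sv k L j i,
     2 * mB k <= j & ~~ inc k (Mn k 0) j && ~~ inc k (Mn k (2 * mB k).+1) j]]) ->
   l < dF k L c y ->
   exists P, [/\ is_pathG k L P,
  path_between (Sset k) (Tset k) P, (forall v, v \in P -> hF k v = k - 2) &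
  exists F, [/\ lip k L F, l < F y & forall v, v \in P -> F v = 0]].
  move=> [P [HP HB HV]] Hy; exists P; split => //.
  - by move=> v /HV [j [i [A1 A2 -> _ _]]]; apply: hF_sv.
  - exists (dF k L c); split => //; first exact: (dF_lip Hk HLc).
    by move=> v /HV [j [i [A1 A2 -> A4 _]]]; apply: dF_sv.
have FromA : forall z F, 2 * mB k <= z <= (4 * mB k).+1 -> lip k L F -> l < F y ->
   (forall j i, j < size (zedges k) -> i <= L j -> ~~ inc k z j -> F (sv k L j i) = 0) ->
   exists P, [/\ is_pathG k L P,
  path_between (Sset k) (Tset k) P, (forall v, v \in P -> hF k v = k - 2) &
  exists F, [/\ lip k L F, l < F y & forall v, v \in P -> F v = 0]].
  move=> z F Hz HF Hy HF0. have [P [HP HB HV]] := Avoid Hz.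
  exists P; split => //.
  - by move=> v /HV [j [i [A1 A2 -> _]]]; apply: hF_sv.
  - exists F; split => //.
    by move=> v /HV [j [i [A1 A2 -> A4]]]; apply: HF0.
have gF0 : forall z j i, j < size (zedges k) -> i <= L j -> ~~ inc k z j ->
    gF k L c z (sv k L j i) = 0.
  move=> z j i H1 H2; rewrite /inc negb_or => /andP [N1 N2]. exact: (gF_sv c H1 H2 N1 N2).
case: y FromC FromA => [u|[j0 i0]] FromC FromA /=.
- move=> Hu. case: (ltnP u (2 * mB k)) => Hu2.
  + apply: FromC; first exact: (@Cpath k L Hk HL0).
    rewrite /= (_ : 2 * mB k <= u = false) /c; lia.
  + apply: (FromA u (gF k L c u)) => //; first lia.
    * apply: (gF_lip Hk HLc); lia.
    * by rewrite /= eqxx /c; lia.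
    * move=> j i H1 H2 H3; exact: gF0.
- move=> [Hj0 Hi0]. have Hj0' := Hj0. rewrite size_zedges // in Hj0'.
  have HLc0 := HLc Hj0.
  case: (ltnP j0 (2 * mB k)) => Hj2.
  + have [R1 R2] := E_chord Hk Hj2.
    case: (leqP (L j0 - i0) l) => Hd.
    * apply: (FromA (E k j0).2 (gF k L c (E k j0).2)) => //; first lia.
      -- apply: (gF_lip Hk HLc); lia.
      -- by rewrite /= eqxx /c; case: eqP => _; lia.
      -- move=> j i H1 H2 H3; exact: gF0.
    * apply: FromC; first exact: (@Cpath k L Hk HL0).
      by rewrite /= Hj2 /c; lia.
  + have HE := @E_Mn k Hk (j0 - 2 * mB k) ltac:(lia).
    rewrite (_ : 2 * mB k + (j0 - 2 * mB k) = j0) in HE; last lia.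
    have R1 := @Mn_range k Hk (j0 - 2 * mB k) ltac:(lia).
    have R2 := @Mn_range k Hk (j0 - 2 * mB k).+1 ltac:(lia).
    have Ra : 2 * mB k <= (E k j0).1 <= (4 * mB k).+1 by rewrite HE.
    have Rb : 2 * mB k <= (E k j0).2 <= (4 * mB k).+1 by rewrite HE.
    case: (leqP i0 l) => Hd1.
    * apply: (FromA (E k j0).1 (gF k L c (E k j0).1)) => //.
      -- apply: (gF_lip Hk HLc); lia.
      -- by rewrite /= eqxx /c; case: eqP => _; lia.
      -- move=> j i H1 H2 H3; exact: gF0.
    case: (leqP (L j0 - i0) l) => Hd2.
    * apply: (FromA (E k j0).2 (gF k L c (E k j0).2)) => //.
      -- apply: (gF_lip Hk HLc); lia.
      -- by rewrite /= eqxx /c; case: eqP => _; lia.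
      -- move=> j i H1 H2 H3; exact: gF0.
    * apply: (FromA (E k j0).1 (fF L j0)) => //.
      -- exact: (@fF_lip k L Hk j0).
      -- by rewrite /= eqxx; lia.
      -- move=> j i H1 H2 H3. apply: fF_sv. apply: contra H3 => /eqP ->.
         by rewrite /inc eqxx.
Qed.

End Final.

Theorem mainTheorem2 (l k : nat) (L : nat -> nat) :
  1 <= l -> 2 * l + 2 < k ->
  (forall j, j < size (zedges k) -> 2 * l < L j) ->
  forall X : seq vtx, size X <= 2 -> (forall x, x \in X -> inG k L x) ->
  exists P : seq vtx,
    is_pathG k L P /\ path_between (Sset k) (Tset k) P /\ dist_gt k L X P l.
Proof.
move=> Hl Hkl HLj X HX HXin.
have Hk : 2 <= k by lia.
have helper : forall P, (forall w v, w \in X -> v \in P ->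
    exists F, lip k L F /\ (l + F v < F w \/ l + F w < F v)) -> dist_gt k L X P l.
  move=> P H Q HQ [[A B]|[A B]].
  - have [F [HF HFv]] := H _ _ A B. exact: (far_path HF HQ HFv).
  - have [F [HF HFv]] := H _ _ B A. apply: (far_path HF HQ). tauto.
case: (boolP (all (fun w => l < hF k w) X)) => Hall.
- exists [:: inl 1]; split; last split.
  + rewrite /= /inG; split => //; split => // v; rewrite inE => /eqP ->.
    have [P4 _] := pow_k Hk. have := mB_pos k. lia.
  + by left; rewrite /first /final /= !inE eqxx.
  + apply: helper => w v Hw; rewrite inE => /eqP ->.
    exists (hF k); split; first exact: hF_lip.
    left; rewrite /= trunc_log1. have := allP Hall w Hw. rewrite /=. lia.
- pose fl := [seq w <- X | l < hF k w].
  have Hfl : size fl <= 1.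
    move: Hall; rewrite -has_predC has_count => Hc.
    have := count_predC (fun w => l < hF k w) X.
    rewrite /fl size_filter. lia.
  pose y := head (inl 1) fl.
  have Hy : inG k L y.
    rewrite /y; case E: fl => [|a s] /=.
    + have [P4 _] := pow_k Hk. have := mB_pos k. lia.
    + apply: HXin. have : a \in fl by rewrite E inE eqxx.
      by rewrite mem_filter => /andP [].
  have [P [HP HB Hh [F [HF Fy F0]]]] := Ylem Hl Hkl HLj Hy.
  exists P; split => //; split => //.
  apply: helper => w v Hw Hv.
  case: (leqP (hF k w) l) => Hw2.
  + exists (hF k); split; first exact: hF_lip.
    right; rewrite (Hh v Hv). lia.
  + exists F; split => //. left; rewrite F0 //.
    have : w \in fl by rewrite mem_filter Hw2 Hw.
    move: Fy; rewrite /y => Fy. clear Hy. clear y. move: Fy.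
    case: fl Hfl => [|a [|b s]] //= _ Fy. rewrite inE => /eqP ->. lia.
Qed.
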